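(* Let $\mathcal C=\mathcal C(I,A,(\rho_i)_{i\in I},(C^a)_{a\in A})$ be a connected Cartan scheme and $\mathcal R=\mathcal R(\mathcal C,(R^a)_{a\in A})$ a finite root system of type $\mathcal C$. Let $a,b\in A$ and $i,j,l\in I$ such that $i\neq j$, $\rho_i(a)=\rho_j(a)=b\neq a$, and $\rho_l(a)=a$. Then: (1) $c^a_{ij}c^a_{il}c^a_{jl}=0$; (2) if $\rho_i\rho_l(b)\neq\rho_l(b)$ and $\rho_j\rho_l(b)\neq\rho_l(b)$, then $c^a_{ln}=c^b_{ln}$ for all $n\in I$.
   Context: Let $I$ be a nonempty finite set and $\{\alpha_i\mid i\in I\}$ the standard basis of $\mathbb Z^I$; $\mathbb N_0=\{0,1,2,\dots\}$. A generalized Cartan matrix is $C=(c_{ij})_{i,j\in I}\in\mathbb Z^{I\times I}$ with $c_{ii}=2$, $c_{jk}\le0$ for $j\ne k$, and $c_{ij}=0\Rightarrow c_{ji}=0$. A Cartan scheme $\mathcal C=\mathcal C(I,A,(\rho_i)_{i\in I},(C^a)_{a\in A})$ consists of a nonempty set $A$, maps $\rho_i:A\to A$ and generalized Cartan matrices $C^a=(c^a_{jk})_{j,k\in I}$ such that (C1) $\rho_i^2=\mathrm{id}$ and (C2) $c^a_{ij}=c^{\rho_i(a)}_{ij}$ for all $a\in A$, $i,j\in I$. It is connected if the group generated by the $\rho_i$ acts transitively on $A$. For $i\in I$, $a\in A$ let $\sigma_i^a\in\mathrm{Aut}(\mathbb Z^I)$, $\sigma_i^a(\alpha_j)=\alpha_j-c^a_{ij}\alpha_i$.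 A root system of type $\mathcal C$ is a family $\mathcal R=\mathcal R(\mathcal C,(R^a)_{a\in A})$ of subsets $R^a\subset\mathbb Z^I$ such that, writing $R^a_+=R^a\cap\mathbb N_0^I$ and $m^a_{i,j}=|R^a\cap(\mathbb N_0\alpha_i+\mathbb N_0\alpha_j)|$, for all $a\in A$, $i,j\in I$: (R1) $R^a=R^a_+\cup(-R^a_+)$; (R2) $R^a\cap\mathbb Z\alpha_i=\{\alpha_i,-\alpha_i\}$; (R3) $\sigma_i^a(R^a)=R^{\rho_i(a)}$; (R4) if $i\neq j$ and $m^a_{i,j}$ is finite then $(\rho_i\rho_j)^{m^a_{i,j}}(a)=a$. It is finite if every $R^a$ is finite. *)

(* Defs.v *)
From HB Require Import structures.
From mathcomp Require Import all_boot all_order all_algebra.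
Set Implicit Arguments. Unset Strict Implicit. Unset Printing Implicit Defensive.
Import Order.TTheory GRing.Theory Num.Theory.
Local Open Scope ring_scope.

Definition vecZ (I : finType) := {ffun I -> int}.

Definition alpha (I : finType) (i : I) : vecZ I := [ffun k => ((k == i) : nat)%:Z].

Definition gcm (I : finType) (c : I -> I -> int) : Prop :=
  (forall i, c i i = 2) /\
  (forall j k, j != k -> c j k <= 0) /\
  (forall i j, c i j = 0 -> c j i = 0).

Definition cartan_scheme (I : finType) (A : Type)
    (rho : I -> A -> A) (C : A -> I -> I -> int) : Prop :=
  (0 < #|I|)%N /\ (exists a : A, True) /\
  (forall a, gcm (C a)) /\
  (forall i a, rho i (rho i a) = a) /\
  (forall a i j, C a i j = C (rho i a) i j).

(* connected: the group generated by the rho_i acts transitively on A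
   (since the rho_i are involutions, words in the rho_i suffice) *)
Definition connected_scheme (I : finType) (A : Type) (rho : I -> A -> A) : Prop :=
  forall a b : A, exists w : seq I, foldr (fun i x => rho i x) a w = b.

(* sigma_i^a : alpha_j |-> alpha_j - c^a_ij alpha_i, extended linearly *)
Definition sigma (I : finType) (A : Type) (C : A -> I -> I -> int)
    (i : I) (a : A) (v : vecZ I) : vecZ I :=
  [ffun k => v k - (\sum_(j : I) C a i j * v j) * alpha i k].

Definition nonneg_vec (I : finType) (v : vecZ I) : Prop := forall k, 0 <= v k.

Definition neg_vec (I : finType) (v : vecZ I) : vecZ I := [ffun k => - v k].

Definition has_card (I : finType) (P : vecZ I -> Prop) (m : nat) : Prop :=
  exists s : seq (vecZ I), uniq s /\ size s = m /\ (forall x, x \in s <-> P x).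

Definition finite_set (I : finType) (P : vecZ I -> Prop) : Prop :=
  exists s : seq (vecZ I), forall x, P x <-> x \in s.

Definition in_cone2 (I : finType) (i j : I) (x : vecZ I) : Prop :=
  exists p q : nat, x = [ffun k => p%:Z * alpha i k + q%:Z * alpha j k].

Definition root_system (I : finType) (A : Type)
    (rho : I -> A -> A) (C : A -> I -> I -> int) (R : A -> vecZ I -> Prop) : Prop :=
  (forall a x, R a x <-> ((R a x /\ nonneg_vec x) \/
                          (R a (neg_vec x) /\ nonneg_vec (neg_vec x)))) /\
  (forall a i x, (R a x /\ exists k : int, x = [ffun t => k * alpha i t]) <->
                 (x = alpha i \/ x = neg_vec (alpha i))) /\
  (forall a i y, R (rho i a) y <-> exists x, R a x /\ y = sigma C i a x) /\
  (forall a i j m, i != j ->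
     has_card (fun x => R a x /\ in_cone2 i j x) m ->
     iter m (fun x => rho i (rho j x)) a = a).

Definition finite_root_system (I : finType) (A : Type) (R : A -> vecZ I -> Prop) : Prop :=
  forall a, finite_set (R a).

(* Main.v *)
Require Import Defs.
From mathcomp Require Import all_boot all_order all_algebra.
From mathcomp Require Import ring zify lra.
Set Implicit Arguments. Unset Strict Implicit. Unset Printing Implicit Defensive.
Import Order.TTheory GRing.Theory Num.Theory.
Local Open Scope ring_scope.

Lemma alphaE (I : finType) (i k : I) : alpha i k = (k == i)%:R.
Proof. by rewrite ffunE; case: (k == i). Qed.

Lemma sum_alpha (I : finType) (F : I -> int) (m : I) (c : int) :
  \sum_t F t * (c * alpha m t) = c * F m.
Proof.
rewrite (bigD1 m) //= big1 ?addr0.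
  by rewrite alphaE eqxx mulr1 mulrC.
by move=> t /negbTE htm; rewrite alphaE htm mulr0 mulr0.
Qed.

Definition Lf (I : finType) (A : Type) (C : A -> I -> I -> int) (x : A) (k : I) (v : vecZ I) :=
  \sum_t C x k t * v t.

Lemma sigmaE (I : finType) (A : Type) (C : A -> I -> I -> int) k x (v : vecZ I) t :
  sigma C k x v t = v t - Lf C x k v * alpha k t.
Proof. by rewrite ffunE. Qed.

Lemma L_sigma (I : finType) (A : Type) (C : A -> I -> I -> int) y m k x (v : vecZ I) :
  Lf C y m (sigma C k x v) = Lf C y m v - Lf C x k v * C y m k.
Proof.
rewrite /Lf.
under eq_bigr => t _ do rewrite ffunE mulrBr.
rewrite sumrB; congr (_ - _).
rewrite -(sum_alpha (C y m) k (\sum_t C x k t * v t)).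
by apply: eq_bigr => t _; rewrite -/(Lf C x k v).
Qed.


Lemma Rstep (I : finType) (A : Type) (rho : I -> A -> A) (C : A -> I -> I -> int) (R : A -> vecZ I -> Prop)
  (hR : root_system rho C R) x k v : R x v -> R (rho k x) (sigma C k x v).
Proof. by case: hR => _ [_ [h3 _]] Rv; apply/h3; exists v. Qed.

Lemma Rsign (I : finType) (A : Type) (rho : I -> A -> A) (C : A -> I -> I -> int) (R : A -> vecZ I -> Prop)
  (hR : root_system rho C R) x v : R x v -> (forall k, 0 <= v k) \/ (forall k, v k <= 0).
Proof.
case: hR => [h1 _] Rv; case: (proj1 (h1 x v) Rv) => [[_ h]|[_ h]]; [left|right] => k.
  exact: h.
by have := h k; rewrite ffunE oppr_ge0.
Qed.

Lemma Ralpha (I : finType) (A : Type) (rho : I -> A -> A) (C : A -> I -> I -> int) (R : A -> vecZ I -> Prop)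
  (hR : root_system rho C R) x k : R x (alpha k).
Proof. by case: hR => _ [h2 _]; have [] := proj2 (h2 x k (alpha k)) (or_introl erefl). Qed.

Lemma R2c (I : finType) (A : Type) (rho : I -> A -> A) (C : A -> I -> I -> int) (R : A -> vecZ I -> Prop)
  (hR : root_system rho C R) x k (c : int) : R x [ffun t => c * alpha k t] -> c = 1 \/ c = -1.
Proof.
case: hR => _ [h2 _] Rv.
have [] := proj1 (h2 x k _) (conj Rv (ex_intro _ c erefl)) => /ffunP /(_ k);
  rewrite !ffunE eqxx /= mulr1.
  by move=> ->; left.
by move=> ->; right.
Qed.

Lemma no_inf (I : finType) (A : Type) (R : A -> vecZ I -> Prop)
  (hfin : finite_root_system R) x (f : nat -> vecZ I) :
  (forall n, R x (f n)) -> injective f -> False.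
Proof.
move=> Rf finj; case: (hfin x) => s hs.
have U : uniq (map f (iota 0 (size s).+1)) by rewrite map_inj_uniq // iota_uniq.
have S : {subset map f (iota 0 (size s).+1) <= s}.
  by move=> y /mapP [n _ ->]; apply/hs.
by have := uniq_leq_size U S; rewrite size_map size_iota ltnn.
Qed.

Lemma incr_inj (g : nat -> int) : (forall n, g n < g n.+1) -> injective g.
Proof.
move=> h.
have lt : forall m n, (m < n)%N -> g m < g n.
  move=> m n; elim: n => // n IH; rewrite ltnS leq_eqVlt => /orP [/eqP ->|/IH hm] //.
  exact: lt_trans hm (h n).
move=> m n e; case: (ltngtP m n) => // hmn.
  by have := lt _ _ hmn; rewrite e ltxx.
by have := lt _ _ hmn; rewrite e ltxx.
Qed.


Definition vec3 (I : finType) (i j l : I) (x y z : int) : vecZ I :=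
  [ffun t => x * alpha i t + y * alpha j t + z * alpha l t].

Lemma Lf_vec3 (I : finType) (A : Type) (C : A -> I -> I -> int) w k i j l x y z :
  Lf C w k (vec3 i j l x y z) = x * C w k i + y * C w k j + z * C w k l.
Proof.
rewrite /Lf.
under eq_bigr => t _ do rewrite ffunE !mulrDr.
by rewrite !big_split /= !sum_alpha.
Qed.

Lemma sigma_vec3_1 (I : finType) (A : Type) (C : A -> I -> I -> int) w i j l x y z :
  sigma C i w (vec3 i j l x y z) = vec3 i j l (x - (x * C w i i + y * C w i j + z * C w i l)) y z.
Proof. apply/ffunP => t; rewrite sigmaE Lf_vec3 !ffunE; ring. Qed.
Lemma sigma_vec3_2 (I : finType) (A : Type) (C : A -> I -> I -> int) w i j l x y z :
  sigma C j w (vec3 i j l x y z) = vec3 i j l x (y - (x * C w j i + y * C w j j + z * C w j l)) z.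
Proof. apply/ffunP => t; rewrite sigmaE Lf_vec3 !ffunE; ring. Qed.
Lemma sigma_vec3_3 (I : finType) (A : Type) (C : A -> I -> I -> int) w i j l x y z :
  sigma C l w (vec3 i j l x y z) = vec3 i j l x y (z - (x * C w l i + y * C w l j + z * C w l l)).
Proof. apply/ffunP => t; rewrite sigmaE Lf_vec3 !ffunE; ring. Qed.

Lemma vec3_l (I : finType) (i j l : I) x y z : l != i -> l != j -> vec3 i j l x y z l = z.
Proof. by move=> /negbTE h1 /negbTE h2; rewrite !ffunE h1 h2 eqxx /=; ring. Qed.

Lemma vec3_alpha (I : finType) (i j l : I) : vec3 i j l 0 0 (-1) = neg_vec (alpha l).
Proof. apply/ffunP => t; rewrite !ffunE; ring. Qed.


Lemma step1 (cli clj cij cil cji cjl x y z : int) :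
  cli <= -1 -> clj <= -1 -> cij <= -1 -> cil <= -1 -> cji <= -1 -> cjl <= -1 ->
  z <= x -> x <= y -> 0 <= x -> 1 <= y - z ->
  let z1 := z - (x*cli + y*clj + z*2) in
  let x1 := x - (x*2 + y*cij + z1*cil) in
  let y1 := y - (x1*cji + y*2 + z1*cjl) in
  [/\ z1 <= x1, x1 <= y1, 0 <= x1, 1 <= y1 - z1 & z + 1 <= z1].
Proof.
move=> h1 h2 h3 h4 h5 h6 a1 a2 a3 a4 z1 x1 y1.
have e1 : z + 1 <= z1 by rewrite /z1; nia.
have e1' : y <= z1 by rewrite /z1; nia.
have e1'' : x + y - z <= z1 by rewrite /z1; nia.
have e2 : y + z1 - x <= x1 by rewrite /x1; nia.
have e3 : 0 <= x1 by lia.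
have e4 : x1 + z1 - y <= y1 by rewrite /y1; nia.
split; lia.
Qed.

Lemma step2 (cli clj cil cjl x y z : int) :
  cli <= -1 -> clj <= -1 -> cil <= -1 -> cjl <= -1 ->
  4 <= cil * cli + cjl * clj ->
  0 <= z -> 1 <= - (x * cli + y * clj) - 2 * z ->
  let z1 := z - (x*cli + y*clj + z*2) in
  let x1 := x - (x*2 + y*0 + z1*cil) in
  let y1 := y - (x1*0 + y*2 + z1*cjl) in
  [/\ 0 <= z1, 1 <= - (x1 * cli + y1 * clj) - 2 * z1 & z + 1 <= z1].
Proof.
move=> h1 h2 h4 h6 K a1 a2 z1 x1 y1.
set f := - (x * cli + y * clj).
have ez : z1 = f - z by rewrite /z1 /f; ring.
have ef : - (x1 * cli + y1 * clj) = (cil * cli + cjl * clj) * z1 - f by rewrite /x1 /y1 /f; ring.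
rewrite ef ez; split; try lia.
set K' := cil * cli + cjl * clj.
nia.
Qed.


Lemma Rneg (I : finType) (A : Type) (rho : I -> A -> A) (C : A -> I -> I -> int) (R : A -> vecZ I -> Prop)
  (hR : root_system rho C R) x v : R x v -> R x (neg_vec v).
Proof.
case: hR => [h1 _] Rv.
have nn : neg_vec (neg_vec v) = v by apply/ffunP => t; rewrite !ffunE opprK.
case: (proj1 (h1 x v) Rv) => [[_ h]|[h _]] //.
by apply/h1; right; rewrite nn.
Qed.

Lemma part1 (I : finType) (A : Type) (rho : I -> A -> A)
    (C : A -> I -> I -> int) (R : A -> vecZ I -> Prop)
    (hC : cartan_scheme rho C)
    (hR : root_system rho C R) (hfin : finite_root_system R)
    (a b : A) (i j l : I)
    (hij : i != j) (hia : rho i a = b) (hja : rho j a = b) (hba : b <> a)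
    (hla : rho l a = a) :
  C a i j * C a i l * C a j l = 0.
Proof.
case: hC => _ [_ [hg [hinv hC2]]].
have hil : l != i by apply/eqP => e; apply: hba; rewrite -hia -e.
have hjl : l != j by apply/eqP => e; apply: hba; rewrite -hja -e.
have hjb : rho j b = a by rewrite -hja hinv.
have Cbj : forall k, C b j k = C a j k by move=> k; rewrite -hja -hC2.
apply/eqP; apply: contraT => hne.
rewrite !mulf_eq0 !negb_or in hne; case/andP: hne => /andP [n1 n2] n3.
have off : forall u v, u != v -> C a u v != 0 -> C a u v <= -1.
  move=> u v huv hn; have [_ [h _]] := hg a; have := h u v huv; lia.
have tr : forall u v, C a u v != 0 -> C a v u != 0.
  by move=> u v hn; apply/eqP => e; have [_ [_ h]] := hg a; move/eqP: hn; apply; apply: h.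
have d2 : forall x u, C x u u = 2 by move=> x u; have [h _] := hg x; apply: h.
have hli : i != l by rewrite eq_sym.
have hlj : j != l by rewrite eq_sym.
have hji : j != i by rewrite eq_sym.
have h3 := off _ _ hij n1.
have h4 := off _ _ hli n2.
have h5 := off _ _ hji (tr _ _ n1).
have h6 := off _ _ hlj n3.
have h1' := off l i hil (tr _ _ n2).
have h2' := off l j hjl (tr _ _ n3).
set cm := fun v => sigma C j b (sigma C i a (sigma C l a v)).
set f := fun n => iter n cm (vec3 i j l 0 0 (-1)).
have Rf : forall n, R a (f n).
  elim => [|n IH] /=.
    by rewrite vec3_alpha; apply: (Rneg hR); apply: (Ralpha hR).
  rewrite /cm /=.
  have := Rstep hR l IH; rewrite hla => /(Rstep hR i); rewrite hia => /(Rstep hR j).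
  by rewrite hjb.
have stepc : forall x y z, [/\ z <= x, x <= y, 0 <= x & 1 <= y - z] ->
    exists x1 y1 z1, cm (vec3 i j l x y z) = vec3 i j l x1 y1 z1 /\
    [/\ z1 <= x1, x1 <= y1, 0 <= x1, 1 <= y1 - z1 & z + 1 <= z1].
  move=> x y z [a1 a2 a3 a4].
  rewrite /cm sigma_vec3_3 sigma_vec3_1 sigma_vec3_2 !d2 !Cbj.
  have := @step1 _ _ _ _ _ _ x y z h1' h2' h3 h4 h5 h6 a1 a2 a3 a4 => /= [[b1 b2 b3 b4 b5]].
  by do 3 eexists; split; first reflexivity; split.
have Inv : forall n, exists x y z, f n = vec3 i j l x y z /\
    [/\ z <= x, x <= y, 0 <= x & 1 <= y - z].
  elim => [|n [x [y [z [E Ha]]]]].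
    by exists 0, 0, (-1); split => //; lia.
  have -> : f n.+1 = cm (f n) by [].
  have [x1 [y1 [z1 [E1 [b1 b2 b3 b4 _]]]]] := stepc _ _ _ Ha.
  by exists x1, y1, z1; rewrite E E1.
have incr : forall n, f n l < f n.+1 l.
  move=> n; have [x [y [z [E Ha]]]] := Inv n.
  have -> : f n.+1 = cm (f n) by [].
  have [x1 [y1 [z1 [E1 [b1 b2 b3 b4 b5]]]]] := stepc _ _ _ Ha.
  rewrite E E1 !vec3_l //; lia.
exfalso; apply: (no_inf hfin Rf) => m n e.
by apply: (incr_inj incr); rewrite /= e.
Qed.


Definition V2 (I : finType) (i l : I) (p q : int) : vecZ I :=
  [ffun t => p * alpha i t + q * alpha l t].

Lemma Lf_V2 (I : finType) (A : Type) (C : A -> I -> I -> int) w k i l p q :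
  Lf C w k (V2 i l p q) = p * C w k i + q * C w k l.
Proof.
rewrite /Lf.
under eq_bigr => t _ do rewrite ffunE !mulrDr.
by rewrite !big_split /= !sum_alpha.
Qed.

Lemma sigma_V2_1 (I : finType) (A : Type) (C : A -> I -> I -> int) w i l p q :
  sigma C i w (V2 i l p q) = V2 i l (p - (p * C w i i + q * C w i l)) q.
Proof. apply/ffunP => t; rewrite sigmaE Lf_V2 !ffunE; ring. Qed.
Lemma sigma_V2_2 (I : finType) (A : Type) (C : A -> I -> I -> int) w i l p q :
  sigma C l w (V2 i l p q) = V2 i l p (q - (p * C w l i + q * C w l l)).
Proof. apply/ffunP => t; rewrite sigmaE Lf_V2 !ffunE; ring. Qed.

Lemma V2_i (I : finType) (i l : I) p q : l != i -> V2 i l p q i = p.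
Proof. by move=> /negbTE h; rewrite !ffunE eq_sym h eqxx /=; ring. Qed.
Lemma V2_l (I : finType) (i l : I) p q : l != i -> V2 i l p q l = q.
Proof. by move=> /negbTE h; rewrite !ffunE h eqxx /=; ring. Qed.

Lemma V2_0l (I : finType) (i l : I) q : V2 i l 0 q = [ffun t => q * alpha l t].
Proof. by apply/ffunP => t; rewrite !ffunE; ring. Qed.
Lemma V2_0i (I : finType) (i l : I) p : V2 i l p 0 = [ffun t => p * alpha i t].
Proof. by apply/ffunP => t; rewrite !ffunE; ring. Qed.

Lemma RsignV2 (I : finType) (A : Type) (rho : I -> A -> A) (C : A -> I -> I -> int) (R : A -> vecZ I -> Prop)
  (hR : root_system rho C R) x (i l : I) p q : l != i -> R x (V2 i l p q) ->
  (0 <= p /\ 0 <= q) \/ (p <= 0 /\ q <= 0).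
Proof.
move=> hli /(Rsign hR) [] h; have := h i; have := h l;
  rewrite V2_i // V2_l // => h1 h2; [left|right]; split => //.
Qed.

Lemma cone_V2 (I : finType) (i l : I) x : in_cone2 i l x <-> exists p q : nat, x = V2 i l p%:Z q%:Z.
Proof. by []. Qed.

Lemma V2_inj (I : finType) (i l : I) p q p' q' : l != i -> V2 i l p q = V2 i l p' q' -> p = p' /\ q = q'.
Proof.
move=> h e; split.
  by rewrite -(V2_i p q h) -(V2_i p' q' h) e.
by rewrite -(V2_l p q h) -(V2_l p' q' h) e.
Qed.

Lemma R_V2_axis (I : finType) (A : Type) (rho : I -> A -> A) (C : A -> I -> I -> int) (R : A -> vecZ I -> Prop)
  (hR : root_system rho C R) x (i l : I) (p q : nat) : l != i -> R x (V2 i l p%:Z q%:Z) ->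
  (p = 0%N -> q = 1%N) /\ (q = 0%N -> p = 1%N).
Proof.
move=> hli Rv; split => e; rewrite e in Rv.
  by move: Rv; rewrite V2_0l => /(R2c hR) []; lia.
by move: Rv; rewrite V2_0i => /(R2c hR) []; lia.
Qed.


Lemma V2_10 (I : finType) (i l : I) : V2 i l 1%:Z 0%:Z = alpha i.
Proof. by apply/ffunP => t; rewrite !ffunE; ring. Qed.
Lemma V2_01 (I : finType) (i l : I) : V2 i l 0%:Z 1%:Z = alpha l.
Proof. by apply/ffunP => t; rewrite !ffunE; ring. Qed.

Lemma M2 (I : finType) (A : Type) (rho : I -> A -> A)
    (C : A -> I -> I -> int) (R : A -> vecZ I -> Prop)
    (hC : cartan_scheme rho C) (hR : root_system rho C R)
    (a b : A) (i l : I) (hia : rho i a = b) (hba : b <> a) (hla : rho l a = a)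
    (h0 : C a i l = 0) : rho l b = b.
Proof.
have [_ [_ [hg [hinv hC2]]]] := hC.
have hli : l != i by apply/eqP => e; apply: hba; rewrite -hia -e.
have hil : i != l by rewrite eq_sym.
have h0' : C a l i = 0 by have [_ [_ h]] := hg a; apply: h.
have d2 : forall x u, C x u u = 2 by move=> x u; have [h _] := hg x; apply: h.
have hc : has_card (fun x => R a x /\ in_cone2 i l x) 2.
  exists [:: V2 i l 1%:Z 0%:Z; V2 i l 0%:Z 1%:Z]; split; [|split => //].
    rewrite /= andbT inE; apply/eqP => /(V2_inj hli) [] //.
  move=> x; split.
    rewrite !inE => /orP [] /eqP ->; split.
    - by rewrite V2_10; apply: (Ralpha hR).
    - by exists 1%N, 0%N.
    - by rewrite V2_01; apply: (Ralpha hR).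
    - by exists 0%N, 1%N.
  move=> [Rx [p [q E]]]; rewrite E in Rx *.
  have [ax1 ax2] := R_V2_axis hR hli Rx.
  case: (posnP p) => [p0|pp]; first by rewrite p0 (ax1 p0) !inE eqxx orbT.
  case: (posnP q) => [q0|qp]; first by rewrite q0 (ax2 q0) !inE eqxx.
  exfalso; have := Rstep hR l Rx; rewrite hla sigma_V2_2 h0' d2 => /(RsignV2 hR hli).
  lia.
have := (proj2 (proj2 (proj2 hR))) a i l 2%N hil hc => /=.
rewrite hla hia => e.
by rewrite -[RHS]hia -e hinv.
Qed.

Lemma M3 (I : finType) (A : Type) (rho : I -> A -> A)
    (C : A -> I -> I -> int) (R : A -> vecZ I -> Prop)
    (hC : cartan_scheme rho C) (hR : root_system rho C R)
    (a b : A) (i l : I) (hia : rho i a = b) (hba : b <> a) (hla : rho l a = a)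
    (h1 : C a i l = -1) (h2 : C a l i = -1) : rho i (rho l b) = rho l b.
Proof.
have [_ [_ [hg [hinv hC2]]]] := hC.
have hli : l != i by apply/eqP => e; apply: hba; rewrite -hia -e.
have hil : i != l by rewrite eq_sym.
have d2 : forall x u, C x u u = 2 by move=> x u; have [h _] := hg x; apply: h.
have Cbi : forall k, C b i k = C a i k by move=> k; rewrite -hia -hC2.
have hc : has_card (fun x => R a x /\ in_cone2 i l x) 3.
  exists [:: V2 i l 1%:Z 0%:Z; V2 i l 0%:Z 1%:Z; V2 i l 1%:Z 1%:Z]; split; [|split => //].
    rewrite /= !inE !negb_or !andbT; repeat (apply/andP; split); apply/eqP => /(V2_inj hli) [] //.
  move=> x; split.
    rewrite !inE => /or3P [] /eqP ->; split.
    - by rewrite V2_10; apply: (Ralpha hR).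
    - by exists 1%N, 0%N.
    - by rewrite V2_01; apply: (Ralpha hR).
    - by exists 0%N, 1%N.
    - have := Rstep hR l (Ralpha hR a i); rewrite hla -(V2_10 i l) sigma_V2_2 h2 d2.
      by congr (R a (V2 _ _ _ _)); ring.
    - by exists 1%N, 1%N.
  move=> [Rx [p [q E]]]; rewrite E in Rx *.
  have [ax1 ax2] := R_V2_axis hR hli Rx.
  case: (posnP p) => [p0|pp]; first by rewrite p0 (ax1 p0) !inE eqxx !orbT.
  case: (posnP q) => [q0|qp]; first by rewrite q0 (ax2 q0) !inE eqxx.
  have := Rstep hR l Rx; rewrite hla sigma_V2_2 h2 d2 => /(RsignV2 hR hli) s1.
  have := Rstep hR i Rx; rewrite hia sigma_V2_1 h1 d2 => /(RsignV2 hR hli) s2.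
  have epq : p = q by lia.
  subst q.
  have := Rstep hR i Rx; rewrite hia sigma_V2_1 h1 d2.
  have -> : (p%:Z - (p%:Z * 2 + p%:Z * -1)) = 0 by ring.
  rewrite V2_0l => /(R2c hR) hq.
  have -> : p = 1%N by lia.
  by rewrite !inE eqxx !orbT.
have := (proj2 (proj2 (proj2 hR))) a i l 3%N hil hc.
rewrite /=.
rewrite hla hia => e.
have e2 : rho l (rho i (rho l b)) = b by rewrite -[in RHS]hia -e hinv.
by rewrite -{2}e2 hinv.
Qed.


Lemma unip (I : finType) (A : Type) (rho : I -> A -> A)
    (C : A -> I -> I -> int) (R : A -> vecZ I -> Prop)
    (hC : cartan_scheme rho C) (hR : root_system rho C R) (hfin : finite_root_system R)
    (a b : A) (i l : I) (hia : rho i a = b) (hba : b <> a) (hla : rho l a = a)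
    (hlb : rho l b = b) (h0 : C a i l = 0) : forall n, C a l n = C b l n.
Proof.
have [_ [_ [hg [hinv hC2]]]] := hC.
have hli : l != i by apply/eqP => e; apply: hba; rewrite -hia -e.
have d2 : forall x u, C x u u = 2 by move=> x u; have [h _] := hg x; apply: h.
have Cbi : forall k, C b i k = C a i k by move=> k; rewrite -hia -hC2.
have hib : rho i b = a by rewrite -hia hinv.
have h0b : C b i l = 0 by rewrite Cbi.
have h0b' : C b l i = 0 by have [_ [_ h]] := hg b; apply: h.
have Lbi : forall v, Lf C b i v = Lf C a i v.
  by move=> v; apply: eq_bigr => t _; rewrite Cbi.
set u := fun v => sigma C i b (sigma C l b (sigma C i a (sigma C l a v))).
have Ru : forall v, R a v -> R a (u v).
  move=> v Rv; have := Rstep hR l Rv; rewrite hla => /(Rstep hR i); rewrite hia.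
  move=> /(Rstep hR l); rewrite hlb => /(Rstep hR i); by rewrite hib.
have ucoord : forall v, u v = [ffun t => v t + (Lf C a l v - Lf C b l v) * alpha l t].
  move=> v; apply/ffunP => t; rewrite /u !sigmaE !L_sigma !ffunE Lbi h0 h0b h0b' !d2; ring.
move=> n.
case: (eqVneq n l) => [->|hnl]; first by rewrite !d2.
set del := C a l n - C b l n.
have uV : forall c, u (V2 n l 1 c) = V2 n l 1 (c + del).
  move=> c; rewrite ucoord; apply/ffunP => t; rewrite !ffunE !Lf_V2 !d2 /del; ring.
set f := fun k : nat => V2 n l 1 (k%:Z * del).
have Rf : forall k, R a (f k).
  elim => [|k IH].
    have -> : f 0%N = alpha n by apply/ffunP => t; rewrite !ffunE; ring.
    exact: (Ralpha hR).
  have -> : f k.+1 = u (f k) by rewrite /f uV; congr V2; rewrite intS; ring.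
  exact: Ru.
suff : del = 0 by move/eqP; rewrite /del subr_eq0 => /eqP.
case: (eqVneq del 0) => [//|hd]; exfalso.
apply: (no_inf hfin Rf) => m k e.
have := congr1 (fun v : vecZ I => v l) e; have hln : l != n by rewrite eq_sym.
rewrite /f /= !V2_l // => /(mulIf hd) /eqP.
by rewrite eqz_nat => /eqP.
Qed.


Lemma growth2 (I : finType) (A : Type) (rho : I -> A -> A)
    (C : A -> I -> I -> int) (R : A -> vecZ I -> Prop)
    (hC : cartan_scheme rho C)
    (hR : root_system rho C R) (hfin : finite_root_system R)
    (a b : A) (i j l : I)
    (hij : i != j) (hia : rho i a = b) (hja : rho j a = b) (hba : b <> a)
    (hla : rho l a = a)
    (hij0 : C a i j = 0)
    (h4 : C a i l <= -1) (h6 : C a j l <= -1) (h1' : C a l i <= -1) (h2' : C a l j <= -1)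
    (K : 4 <= C a i l * C a l i + C a j l * C a l j) : False.
Proof.
case: hC => _ [_ [hg [hinv hC2]]].
have hil : l != i by apply/eqP => e; apply: hba; rewrite -hia -e.
have hjl : l != j by apply/eqP => e; apply: hba; rewrite -hja -e.
have hjb : rho j b = a by rewrite -hja hinv.
have Cbj : forall k, C b j k = C a j k by move=> k; rewrite -hja -hC2.
have d2 : forall x u, C x u u = 2 by move=> x u; have [h _] := hg x; apply: h.
have hji0 : C a j i = 0 by have [_ [_ h]] := hg a; apply: h.
set cm := fun v => sigma C j b (sigma C i a (sigma C l a v)).
set f := fun n => iter n.+1 cm (vec3 i j l 0 0 (-1)).
have Rcm : forall v, R a v -> R a (cm v).
  move=> v Rv; have := Rstep hR l Rv; rewrite hla => /(Rstep hR i); rewrite hia => /(Rstep hR j).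
  by rewrite hjb.
have Rf : forall n, R a (f n).
  elim => [|n IH]; apply: Rcm => //.
  by rewrite vec3_alpha; apply: (Rneg hR); apply: (Ralpha hR).
have stepc : forall x y z, 0 <= z -> 1 <= - (x * C a l i + y * C a l j) - 2 * z ->
    exists x1 y1 z1, cm (vec3 i j l x y z) = vec3 i j l x1 y1 z1 /\
    [/\ 0 <= z1, 1 <= - (x1 * C a l i + y1 * C a l j) - 2 * z1 & z + 1 <= z1].
  move=> x y z a1 a2.
  rewrite /cm sigma_vec3_3 sigma_vec3_1 sigma_vec3_2 !d2 !Cbj hij0 hji0.
  have := @step2 _ _ _ _ x y z h1' h2' h4 h6 K a1 a2 => /= [[b1 b2 b3]].
  by do 3 eexists; split; first reflexivity; split.
have Inv : forall n, exists x y z, f n = vec3 i j l x y z /\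
    0 <= z /\ 1 <= - (x * C a l i + y * C a l j) - 2 * z.
  elim => [|n [x [y [z [E [a1 a2]]]]]].
    rewrite /f /= /cm sigma_vec3_3 sigma_vec3_1 sigma_vec3_2 !d2 !Cbj hij0 hji0.
    do 3 eexists; split; first reflexivity; split; nia.
  have -> : f n.+1 = cm (f n) by [].
  have [x1 [y1 [z1 [E1 [b1 b2 _]]]]] := stepc _ _ _ a1 a2.
  by exists x1, y1, z1; rewrite E E1.
have incr : forall n, f n l < f n.+1 l.
  move=> n; have [x [y [z [E [a1 a2]]]]] := Inv n.
  have -> : f n.+1 = cm (f n) by [].
  have [x1 [y1 [z1 [E1 [b1 b2 b3]]]]] := stepc _ _ _ a1 a2.
  rewrite E E1 !vec3_l //; lia.
apply: (no_inf hfin Rf) => m n e.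
by apply: (incr_inj incr); rewrite /= e.
Qed.


Unset Implicit Arguments. Set Strict Implicit.

Theorem lemma4p10 (I : finType) (A : Type) (rho : I -> A -> A)
    (C : A -> I -> I -> int) (R : A -> vecZ I -> Prop)
    (hC : cartan_scheme rho C) (hconn : connected_scheme rho)
    (hR : root_system rho C R) (hfin : finite_root_system R)
    (a b : A) (i j l : I)
    (hij : i != j) (hia : rho i a = b) (hja : rho j a = b) (hba : b <> a)
    (hla : rho l a = a) :
  C a i j * C a i l * C a j l = 0 /\
  (rho i (rho l b) <> rho l b -> rho j (rho l b) <> rho l b ->
   forall n : I, C a l n = C b l n).
Proof.
have P1 := part1 hC hR hfin hij hia hja hba hla.
split => // H1 H2 n.
case: (eqVneq (C a i l) 0) => [hi0|hi].
  exact: (unip hC hR hfin hia hba hla (M2 hC hR hia hba hla hi0) hi0).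
case: (eqVneq (C a j l) 0) => [hj0|hj].
  exact: (unip hC hR hfin hja hba hla (M2 hC hR hja hba hla hj0) hj0).
have hij0 : C a i j = 0.
  by move/eqP: P1; rewrite !mulf_eq0 (negbTE hi) (negbTE hj) !orbF => /eqP.
have [_ [_ [hg _]]] := hC.
have hil : l != i by apply/eqP => e; apply: hba; rewrite -hia -e.
have hjl : l != j by apply/eqP => e; apply: hba; rewrite -hja -e.
have off : forall u v, u != v -> C a u v != 0 -> C a u v <= -1.
  move=> u v huv hn; have [_ [h _]] := hg a; have := h u v huv; lia.
have tr : forall u v, C a u v != 0 -> C a v u != 0.
  by move=> u v hn; apply/eqP => e; have [_ [_ h]] := hg a; move/eqP: hn; apply; apply: h.
have hli : i != l by rewrite eq_sym.
have hlj : j != l by rewrite eq_sym.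
have h4 := off _ _ hli hi.
have h6 := off _ _ hlj hj.
have h1' := off l i hil (tr _ _ hi).
have h2' := off l j hjl (tr _ _ hj).
case: (lerP 4 (C a i l * C a l i + C a j l * C a l j)) => K.
  by case: (growth2 hC hR hfin hij hia hja hba hla hij0 h4 h6 h1' h2' K).
have [[e1 e2]|[e1 e2]] : (C a i l = -1 /\ C a l i = -1) \/ (C a j l = -1 /\ C a l j = -1) by nia.
  by case: H1; apply: (M3 hC hR hia hba hla e1 e2).
by case: H2; apply: (M3 hC hR hja hba hla e1 e2).
Qed.
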